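(* Let $\underline\gamma$ be an $\infty$-complete infinite path in a Rauzy diagram, starting at $\pi$, and let $w\in\mathbb R^{\mathcal A}$, $w\neq0$. The set $\mathrm{Aff}(\underline\gamma,w)$ is nonempty if and only if the hyperplane $\{\lambda:\sum_\alpha\lambda_\alpha w_\alpha=0\}$ contains some $\lambda\in(\mathbb R_{>0})^{\mathcal A}$ such that the standard i.e.m. $T_{\pi,\lambda}$ has Rauzy–Veech path equal to $\underline\gamma$. In that case the set $\mathrm{Aff}^{(1)}(\underline\gamma,w)$, parametrized by the vector of lengths $(|I^t_\alpha|)_{\alpha\in\mathcal A}$, is convex and compact.
   Context: Affine i.e.m., standard i.e.m. $T_{\pi,\lambda}$, slope vector, Rauzy–Veech algorithm and Rauzy diagram as usual: the Rauzy–Veech step replaces the map by its first return to $(0,\max(u^t_{d-1},u^b_{d-1}))$ where $u^t_{d-1},u^b_{d-1}$ are the left endpoints of the last top and last bottom intervals; the arrow has top type with winner $\alpha_t$ if $u^t_{d-1}<u^b_{d-1}$ and bottom type with winner $\alpha_b$ otherwise ($\pi_t(\alpha_t)=\pi_b(\alpha_b)=d$). A map with no connection has an infinite Rauzy–Veech path. A path is complete if every letter of $\mathcal A$ is the winner of at least one of its arrows, and an infinite path is $\infty$-complete if it is a concatenation of infinitely many complete paths. $\mathrm{Aff}(\underline\gamma,w)$ is the set of affine i.e.m. with slope vector $\exp w$ (i.e. $|I^b_\alpha|=e^{w_\alpha}|I^t_\alpha|$) whose Rauzy–Veech path is $\underline\gamma$; $\mathrm{Aff}^{(1)}(\underline\gamma,w)$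 is the subset of those defined on $[0,1]$. *)

(* Defs.v *)
From Stdlib Require Import Reals List.
From mathcomp Require Import all_boot.

Set Implicit Arguments.
Unset Strict Implicit.
Unset Printing Implicit Defensive.

(* Combinatorial data.  pi = (pi_t, pi_b), positions are 0-based:           *)
(* pi_t a = k  means  I^t_a is the (k+1)-th top interval; the last position *)
(* is #|A|.-1 (the paper's "d").                                            *)

Definition comb_data (A : finType) : Type := ((A -> nat) * (A -> nat))%type.

Definition valid_comb (A : finType) (pi : comb_data A) : Prop :=
  (forall a, (pi.1 a < #|A|)%N) /\ injective pi.1 /\
  (forall a, (pi.2 a < #|A|)%N) /\ injective pi.2.

Definition irreducible (A : finType) (pi : comb_data A) : Prop :=
  forall k : nat, (0 < k)%N -> (k < #|A|)%N ->
    exists a : A, (pi.1 a < k)%N <> (pi.2 a < k)%N.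

Definition lastl (A : finType) (p : A -> nat) : option A :=
  [pick a | p a == #|A|.-1].

Definition ins_after (A : finType) (p : A -> nat) (w l : A) : A -> nat :=
  fun b => if b == l then (p w).+1
           else if (p w < p b)%N then (p b).+1 else p b.

(* Arrow of the Rauzy diagram of type [top] (true = top type, false = bottom
   type) leaving pi: returns (winner, endpoint). *)
Definition rauzy_move (A : finType) (pi : comb_data A) (top : bool)
  : option (A * comb_data A) :=
  match lastl pi.1, lastl pi.2 with
  | Some at_, Some ab =>
      if top then Some (at_, (pi.1, ins_after pi.2 at_ ab))
      else Some (ab, (ins_after pi.1 ab at_, pi.2))
  | _, _ => None
  end.

(* An infinite path in the Rauzy diagram starting at pi is given by pi and
   the sequence eps of the types of its arrows.  comb_path pi eps n is its
   n-th vertex, winner_at pi eps n the winner of its n-th arrow. *)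
Fixpoint comb_path (A : finType) (pi : comb_data A) (eps : nat -> bool) (n : nat)
  : option (comb_data A) :=
  match n with
  | 0 => Some pi
  | S m => match comb_path pi eps m with
           | Some p => option_map snd (rauzy_move p (eps m))
           | None => None
           end
  end.

Definition winner_at (A : finType) (pi : comb_data A) (eps : nat -> bool) (n : nat)
  : option A :=
  match comb_path pi eps n with
  | Some p => option_map fst (rauzy_move p (eps n))
  | None => None
  end.

Definition complete_seg (A : finType) (pi : comb_data A) (eps : nat -> bool)
  (m n : nat) : Prop :=
  forall a : A, exists k : nat, (m <= k)%N /\ (k < n)%N /\ winner_at pi eps k = Some a.

Definition inf_complete (A : finType) (pi : comb_data A) (eps : nat -> bool) : Prop :=
  exists t : nat -> nat, t 0 = 0 /\
    forall k, (t k < t k.+1)%N /\ complete_seg pi eps (t k) (t k.+1).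

(* Affine interval exchange maps, encoded by (pi, top lengths, bottom       *)
(* lengths): T maps I^t_a affinely and increasingly onto I^b_a.             *)

Local Open Scope R_scope.

Record aiem (A : finType) : Type := AIem {
  ai_pi : comb_data A;
  ai_lt : A -> R;
  ai_lb : A -> R
}.

Definition Rsum (A : finType) (f : A -> R) : R := \big[Rplus/R0]_(a : A) f a.

(* left endpoints (domain starting at 0) *)
Definition u_top (A : finType) (T : aiem A) (a : A) : R :=
  \big[Rplus/R0]_(b : A | ((ai_pi T).1 b < (ai_pi T).1 a)%N) ai_lt T b.
Definition u_bot (A : finType) (T : aiem A) (a : A) : R :=
  \big[Rplus/R0]_(b : A | ((ai_pi T).2 b < (ai_pi T).2 a)%N) ai_lb T b.

Definition upd (A : finType) (f : A -> R) (a : A) (x : R) : A -> R :=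
  fun b => if b == a then x else f b.

(* One Rauzy-Veech step: first return map to (0, max(u^t_{d-1}, u^b_{d-1})).
   Returns the type of the arrow (true = top) and the induced map; None if
   u^t_{d-1} = u^b_{d-1} (the algorithm stops). *)
Definition rv_step (A : finType) (T : aiem A) : option (bool * aiem A) :=
  let pi := ai_pi T in
  let lt := ai_lt T in
  let lb := ai_lb T in
  match lastl pi.1, lastl pi.2 with
  | Some at_, Some ab =>
      if Rlt_dec (u_top T at_) (u_bot T ab) then
        (* top type, winner at_: slope of T on I^t_{at_} *)
        let s := Rdiv (lb at_) (lt at_) in
        Some (true, AIem (pi.1, ins_after pi.2 at_ ab)
                         (upd lt at_ (lt at_ - lb ab))
                         (upd (upd lb ab (s * lb ab)) at_ (lb at_ - s * lb ab)))
      else if Rlt_dec (u_bot T ab) (u_top T at_) then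
        (* bottom type, winner ab: slope of T on I^t_{ab} *)
        let s := Rdiv (lb ab) (lt ab) in
        Some (false, AIem (ins_after pi.1 ab at_, pi.2)
                          (upd (upd lt at_ (Rdiv (lt at_) s)) ab (lt ab - Rdiv (lt at_) s))
                          (upd lb ab (lb ab - lt at_)))
      else None
  | _, _ => None
  end.

Definition rv_path_is (A : finType) (T : aiem A) (eps : nat -> bool) : Prop :=
  exists S : nat -> aiem A, S 0%nat = T /\
    forall n, rv_step (S n) = Some (eps n, S n.+1).

(* affine i.e.m. with combinatorics pi, top lengths lam, slope vector exp w *)
Definition aff_of (A : finType) (pi : comb_data A) (lam w : A -> R) : aiem A :=
  AIem pi lam (fun a => exp (w a) * lam a).

Definition Aff (A : finType) (pi : comb_data A) (eps : nat -> bool) (w : A -> R)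
  (lam : A -> R) : Prop :=
  (forall a, 0 < lam a) /\
  Rsum lam = Rsum (fun a => exp (w a) * lam a) /\
  rv_path_is (aff_of pi lam w) eps.

Definition Aff1 (A : finType) (pi : comb_data A) (eps : nat -> bool) (w : A -> R)
  (lam : A -> R) : Prop :=
  Aff pi eps w lam /\ Rsum lam = R1.

Definition std_iem (A : finType) (pi : comb_data A) (lam : A -> R) : aiem A :=
  AIem pi lam lam.

Definition convex_set (A : finType) (K : (A -> R) -> Prop) : Prop :=
  forall x y (t : R), K x -> K y -> (0 <= t <= 1) ->
    K (fun a => t * x a + (1 - t) * y a).

Definition open_set (A : finType) (U : (A -> R) -> Prop) : Prop :=
  forall x, U x -> exists eps : R, (0 < eps) /\
    forall y, (forall a, Rabs (y a - x a) < eps) -> U y.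

Definition compact_set (A : finType) (K : (A -> R) -> Prop) : Prop :=
  forall (I : Type) (U : I -> (A -> R) -> Prop),
    (forall i, open_set (U i)) ->
    (forall x, K x -> exists i, U i x) ->
    exists l : list I, forall x, K x -> exists i, In i l /\ U i x.

(* Main.v *)
Require Import Defs.
From Stdlib Require Import Reals List.
From mathcomp Require Import all_boot.
Local Open Scope R_scope.

From HB Require Import structures.
From Stdlib Require Import Lra Lia Classical ClassicalEpsilon FunctionalExtensionality.
Set Implicit Arguments.
Unset Strict Implicit.
Unset Printing Implicit Defensive.

HB.instance Definition _ := Monoid.isComLaw.Build R R0 Rplus (fun x y z => esym (Rplus_assoc x y z)) Rplus_comm Rplus_0_l.

Section Sums.
Variable A : finType.

Lemma Rsum_ext (f g : A -> R) : (forall a, f a = g a) -> Rsum f = Rsum g.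
Proof. move=> H; rewrite /Rsum; apply: eq_bigr => a _; exact: H. Qed.

Lemma Rsum_add (f g : A -> R) : Rsum (fun a => f a + g a) = Rsum f + Rsum g.
Proof. by rewrite /Rsum big_split. Qed.

Lemma Rsum_scal (c : R) (f : A -> R) : Rsum (fun a => c * f a) = c * Rsum f.
Proof.
rewrite /Rsum; apply: (big_rec2 (fun y1 y2 => y1 = c * y2)); first by ring.
by move=> i y1 y2 _ ->; ring.
Qed.

Lemma Rsum_zero : Rsum (fun _ : A => 0) = 0.
Proof. by rewrite /Rsum; apply: big1. Qed.

Lemma Rsum_opp (f : A -> R) : Rsum (fun a => - f a) = - Rsum f.
Proof. rewrite (Rsum_ext (g := fun a => -1 * f a)); last by move=> a; ring.
by rewrite Rsum_scal; ring. Qed.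

Lemma Rsum_sub (f g : A -> R) : Rsum (fun a => f a - g a) = Rsum f - Rsum g.
Proof. rewrite /Rminus -Rsum_opp -Rsum_add //. Qed.

Lemma Rsum_lin (c d : R) (f g : A -> R) :
  Rsum (fun a => c * f a + d * g a) = c * Rsum f + d * Rsum g.
Proof. by rewrite Rsum_add !Rsum_scal. Qed.

Lemma Rsum_D1 (f : A -> R) a : Rsum f = f a + \big[Rplus/R0]_(b | b != a) f b.
Proof. by rewrite /Rsum (bigD1 a). Qed.

Lemma Rsum_nonneg (f : A -> R) : (forall a, 0 <= f a) -> 0 <= Rsum f.
Proof.
move=> H; rewrite /Rsum; apply: (big_ind (fun x => 0 <= x)) => //; first lra.
move=> x y; lra.
Qed.

Lemma big_nonneg (P : pred A) (f : A -> R) : (forall a, 0 <= f a) -> 0 <= \big[Rplus/R0]_(b | P b) f b.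
Proof.
move=> H; apply: (big_ind (fun x => 0 <= x)) => //; first lra.
move=> x y; lra.
Qed.

Lemma Rsum_ge_term (f : A -> R) a : (forall b, 0 <= f b) -> f a <= Rsum f.
Proof. move=> H; rewrite (Rsum_D1 f a); have := big_nonneg (fun b => b != a) H; lra. Qed.

Lemma Rsum_two (h : A -> R) a b : a != b ->
  (forall c, c != a -> c != b -> h c = 0) -> Rsum h = h a + h b.
Proof.
move=> ab H; rewrite (Rsum_D1 h a) (bigD1 b) /=; last by rewrite eq_sym.
rewrite big1; first by ring.
by move=> c /andP [ca cb]; apply: H.
Qed.

Lemma Rsum_two_diff (f g : A -> R) a b : a != b ->
  (forall c, c != a -> c != b -> f c = g c) -> Rsum f - Rsum g = (f a - g a) + (f b - g b).
Proof.
move=> ab H; rewrite -Rsum_sub; apply: Rsum_two => // c ca cb.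
rewrite H //; ring.
Qed.

End Sums.

Local Close Scope R_scope.

Section Comb.
Variable A : finType.

Definition vf (f : A -> nat) := (forall a, (f a < #|A|)%N) /\ injective f.

Lemma lastl_val (f : A -> nat) a : lastl f = Some a -> f a = #|A|.-1.
Proof. rewrite /lastl; case: pickP => // x /eqP Hx [<-] //. Qed.

Lemma lastl_ex (f : A -> nat) (a0 : A) : vf f -> exists a, lastl f = Some a.
Proof.
move=> [Hr Hi]; rewrite /lastl; case: pickP => [x _|H]; first by exists x.
exfalso.
have Hlt : forall a, (f a < #|A|.-1)%N.
  move=> a; have Hne := negbT (H a); move: (Hr a) Hne.
  case: #|A| => // n; rewrite ltnS /= => h1 h2; by rewrite ltn_neqAle h2 h1.
pose g (a : A) : 'I_(#|A|.-1) := Ordinal (Hlt a).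
have gi : injective g by move=> x y [] /Hi.
have := leq_card g gi; rewrite card_ord.
have : (0 < #|A|)%N by apply/card_gt0P; exists a0.
case: #|A| => //= n _; rewrite ltnn //.
Qed.

Lemma lastl_lt (f : A -> nat) a b : vf f -> lastl f = Some a -> (f b < f a)%N = (b != a).
Proof.
move=> [Hr Hi] /lastl_val Ha; rewrite Ha.
case: (b =P a) => [->|Hba] /=; first by rewrite Ha ltnn.
have := Hr b; have : f b != f a by apply/eqP => /Hi.
rewrite Ha; case: #|A| => // n; rewrite ltnS /= => ne le.
by rewrite ltn_neqAle ne le.
Qed.

Lemma lastl_uniq (f : A -> nat) a b : vf f -> lastl f = Some a -> f b = #|A|.-1 -> b = a.
Proof. move=> [Hr Hi] /lastl_val Ha Hb; apply: Hi; by rewrite Ha Hb. Qed.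

Lemma ins_vf (f : A -> nat) w l : vf f -> lastl f = Some l -> w != l -> vf (ins_after f w l).
Proof.
move=> Hv Hl wl; have [Hr Hi] := Hv.
have Hw : (f w < f l)%N by rewrite (lastl_lt w Hv Hl).
have Hfl := lastl_val Hl.
have Hlt : forall b, b != l -> (f b < f l)%N by move=> b; rewrite (lastl_lt b Hv Hl).
have Hd : (f l < #|A|)%N := Hr l.
split.
- move=> b; rewrite /ins_after; case: (b =P l) => [_|/eqP bl].
    by apply: leq_ltn_trans Hd.
  case: ifP => _; last exact: Hr b.
  by apply: leq_ltn_trans Hd; apply: Hlt.
- move=> x y; rewrite /ins_after.
  case: (x =P l) => [->|/eqP xl]; case: (y =P l) => [->|/eqP yl] //.
  + case: ifP => Hy.
      by move=> [] E; move: Hy; rewrite -E ltnn.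
    by move=> E; move: Hy; rewrite -E ltnSn.
  + case: ifP => Hx.
      by move=> [] E; move: Hx; rewrite E ltnn.
    by move=> E; move: Hx; rewrite E ltnSn.
  + case: ifP => Hx; case: ifP => Hy.
    * by move=> [] /Hi.
    * move=> E; exfalso; move/negbT: Hy; rewrite -leqNgt => /leP Hy; move/ltP: Hx => Hx; lia.
    * move=> E; exfalso; move/negbT: Hx; rewrite -leqNgt => /leP Hx; move/ltP: Hy => Hy; lia.
    * exact: Hi.
Qed.

Lemma ins_self_none (f : A -> nat) a : vf f -> lastl f = Some a -> lastl (ins_after f a a) = None.
Proof.
move=> Hv Ha; have [Hr Hi] := Hv; have Hfa := lastl_val Ha.
rewrite /lastl; case: pickP => // x; rewrite /ins_after.
case: (x =P a) => [->|/eqP xa].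
  by rewrite Hfa; case: #|A| => // n /eqP /= H; exfalso; lia.
case: ifP => H.
  move: H; rewrite Hfa; have := Hr x; case: #|A| => //= n /ltP h1 /ltP h2 /eqP h3; exfalso; lia.
move/eqP => Hx; move: xa; rewrite (lastl_uniq Hv Ha Hx) eqxx //.
Qed.

End Comb.

Local Open Scope R_scope.

Local Close Scope R_scope.

Section Path.
Variable A : finType.
Variable pi : comb_data A.
Variable eps : nat -> bool.
Variable a0 : A.
Hypothesis Hv : valid_comb pi.
Hypothesis Hc : inf_complete pi eps.

Definition vc (p : comb_data A) := vf p.1 /\ vf p.2.

Lemma vc_pi : vc pi.
Proof. by case: Hv => [h1 [h2 [h3 h4]]]; split; split. Qed.

Lemma t_ge : exists t : nat -> nat, t 0%N = 0%N /\ (forall k, (t k < t k.+1)%N /\ complete_seg pi eps (t k) (t k.+1)) /\ forall k, (k <= t k)%N.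
Proof.
case: Hc => t [t0 Ht]; exists t; split => //; split => // k.
elim: k => // k IH; have := (Ht k).1; by apply: leq_ltn_trans.
Qed.

Lemma win_later n : exists k, (n <= k)%N /\ winner_at pi eps k <> None.
Proof.
case: t_ge => t [t0 [Ht Hk]].
case: ((Ht n).2 a0) => k [h1 [h2 h3]]; exists k; split.
  exact: leq_trans (Hk n) h1.
by rewrite h3.
Qed.

Lemma none_after n : comb_path pi eps n = None -> forall k, (n <= k)%N -> comb_path pi eps k = None.
Proof.
move=> Hn k; elim: k => [|k IH]; first by rewrite leqn0 => /eqP <-.
rewrite leq_eqVlt => /orP [/eqP <- //|]; rewrite ltnS => /IH /= -> //.
Qed.

Lemma lastnone_win n p : comb_path pi eps n = Some p -> (lastl p.1 = None \/ lastl p.2 = None) ->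
  forall k, (n <= k)%N -> winner_at pi eps k = None.
Proof.
move=> Hp Hl.
have Hn1 : comb_path pi eps n.+1 = None.
  rewrite /= Hp /rauzy_move; case: Hl => ->; first by [].
  by case: (lastl p.1).
move=> k; rewrite leq_eqVlt => /orP [/eqP <-|Hk].
  rewrite /winner_at Hp /rauzy_move; case: Hl => ->; first by [].
  by case: (lastl p.1).
by rewrite /winner_at (none_after Hn1 Hk).
Qed.

Lemma good_step n p : comb_path pi eps n = Some p -> vc p ->
  exists at_ ab, lastl p.1 = Some at_ /\ lastl p.2 = Some ab /\ at_ != ab.
Proof.
move=> Hp [v1 v2].
case: (lastl_ex a0 v1) => at_ Ha; case: (lastl_ex a0 v2) => ab Hb.
exists at_, ab; do 2 split => //.
apply/eqP => E; subst ab.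
have Hn1 : comb_path pi eps n.+1 = Some (if eps n then (p.1, ins_after p.2 at_ at_) else (ins_after p.1 at_ at_, p.2)).
  by rewrite /= Hp /rauzy_move Ha Hb; case: (eps n).
have Hl : lastl (if eps n then (p.1, ins_after p.2 at_ at_) else (ins_after p.1 at_ at_, p.2)).1 = None \/
          lastl (if eps n then (p.1, ins_after p.2 at_ at_) else (ins_after p.1 at_ at_, p.2)).2 = None.
  case: (eps n); [right; exact: (ins_self_none v2 Hb) | left; exact: (ins_self_none v1 Ha)].
have := lastnone_win Hn1 Hl; case: (win_later n.+1) => k [hk hw] H.
by apply: hw; apply: H.
Qed.

Lemma path_good n : exists p at_ ab, comb_path pi eps n = Some p /\ vc p /\
  lastl p.1 = Some at_ /\ lastl p.2 = Some ab /\ at_ != ab.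
Proof.
elim: n => [|n [p [at_ [ab [Hp [Hvp [Ha [Hb Hab]]]]]]]].
  have H0 : comb_path pi eps 0 = Some pi by [].
  case: (good_step H0 vc_pi) => at_ [ab [h1 [h2 h3]]].
  exists pi, at_, ab; split; first by []. split; first exact: vc_pi. by [].
pose p' := if eps n then (p.1, ins_after p.2 at_ ab) else (ins_after p.1 ab at_, p.2).
have Hn1 : comb_path pi eps n.+1 = Some p'.
  by rewrite /= Hp /rauzy_move Ha Hb /p'; case: (eps n).
have Hv' : vc p'.
  case: Hvp => v1 v2; rewrite /p'; case: (eps n); split => //=.
    exact: (ins_vf v2 Hb Hab).
  by apply: (ins_vf v1 Ha); rewrite eq_sym.
case: (good_step Hn1 Hv') => at' [ab' [h1 [h2 h3]]].
exists p', at', ab'; split; first by []. split; first exact: Hv'. by [].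
Qed.

Definition P n : comb_data A := odflt pi (comb_path pi eps n).
Definition at_ n : A := odflt a0 (lastl (P n).1).
Definition ab_ n : A := odflt a0 (lastl (P n).2).
Definition winner n : A := if eps n then at_ n else ab_ n.
Definition loser n : A := if eps n then ab_ n else at_ n.

Lemma P_eq n : comb_path pi eps n = Some (P n).
Proof. by case: (path_good n) => p [? [? [Hp _]]]; rewrite /P Hp. Qed.

Lemma P_vc n : vc (P n).
Proof. by case: (path_good n) => p [? [? [Hp [H _]]]]; rewrite /P Hp. Qed.

Lemma at_eq n : lastl (P n).1 = Some (at_ n).
Proof. by case: (path_good n) => p [a [b [Hp [_ [H _]]]]]; rewrite /at_ /P Hp H. Qed.

Lemma ab_eq n : lastl (P n).2 = Some (ab_ n).
Proof. by case: (path_good n) => p [a [b [Hp [_ [_ [H _]]]]]]; rewrite /ab_ /P Hp H. Qed.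

Lemma at_ab n : at_ n != ab_ n.
Proof.
case: (path_good n) => p [a [b [Hp [_ [H1 [H2 H]]]]]].
by rewrite /at_ /ab_ /P Hp H1 H2.
Qed.

Lemma P_step n : P n.+1 = if eps n then ((P n).1, ins_after (P n).2 (at_ n) (ab_ n))
                          else (ins_after (P n).1 (ab_ n) (at_ n), (P n).2).
Proof.
have := P_eq n.+1; rewrite /= P_eq /rauzy_move at_eq ab_eq.
by case: (eps n) => /= [[]|[]].
Qed.

Lemma winner_eq n : winner_at pi eps n = Some (winner n).
Proof. by rewrite /winner_at P_eq /rauzy_move at_eq ab_eq /winner; case: (eps n). Qed.

Lemma winner_last n : winner n = at_ n.+1 \/ winner n = ab_ n.+1.
Proof.
rewrite /winner /at_ /ab_ P_step; case: (eps n) => /=; [left|right]; by [].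
Qed.

Lemma wl_last n : (winner n = at_ n /\ loser n = ab_ n) \/ (winner n = ab_ n /\ loser n = at_ n).
Proof. rewrite /winner /loser; case: (eps n); [left|right]; by []. Qed.

Lemma complete_two K : exists t1 t2 t3, (K <= t1)%N /\ (t1 < t2)%N /\ (t2 < t3)%N /\
  complete_seg pi eps t1 t2 /\ complete_seg pi eps t2 t3.
Proof.
case: t_ge => t [t0 [Ht Hk]].
exists (t K), (t K.+1), (t K.+2); split; first exact: Hk.
split; first exact: (Ht K).1. split; first exact: (Ht K.+1).1.
split; [exact: (Ht K).2 | exact: (Ht K.+1).2].
Qed.

End Path.

Local Open Scope R_scope.

Section Dyn.
Variable A : finType.
Variable pi : comb_data A.
Variable eps : nat -> bool.
Variable a0 : A.
Hypothesis Hv : valid_comb pi.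
Hypothesis Hc : inf_complete pi eps.

Local Notation aT m := (at_ pi eps a0 m).
Local Notation aB m := (ab_ pi eps a0 m).

Lemma aTB m : aT m <> aB m.
Proof. by apply/eqP; apply: at_ab. Qed.
Lemma aBT m : aB m <> aT m.
Proof. by move=> E; apply: (aTB (m:=m)). Qed.

Fixpoint V (w : A -> R) (n : nat) : A -> R :=
  match n with
  | 0%nat => w
  | S m => let v := V w m in
      if eps m then upd v (aB m) (v (aB m) + v (aT m))
      else upd v (aT m) (v (aT m) + v (aB m))
  end.

Definition Gstep m (v g : A -> R) : A -> R :=
  if eps m then upd g (aT m) (g (aT m) - exp (v (aB m)) * g (aB m))
  else upd (upd g (aT m) (g (aT m) / exp (v (aB m)))) (aB m) (g (aB m) - g (aT m) / exp (v (aB m))).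

Definition Ginv m (v y : A -> R) : A -> R :=
  if eps m then upd y (aT m) (y (aT m) + exp (v (aB m)) * y (aB m))
  else upd (upd y (aT m) (y (aT m) * exp (v (aB m)))) (aB m) (y (aB m) + y (aT m)).

Fixpoint G (w : A -> R) (n : nat) (lam : A -> R) : A -> R :=
  match n with
  | 0%nat => lam
  | S m => Gstep m (V w m) (G w m lam)
  end.

Lemma upd_same (f : A -> R) a x : upd f a x a = x.
Proof. by rewrite /upd eqxx. Qed.
Lemma upd_other (f : A -> R) a x b : b <> a -> upd f a x b = f b.
Proof. by move=> H; rewrite /upd; case: (b =P a). Qed.

Ltac updsimp := repeat (first [ rewrite upd_same | rewrite upd_other; last by (apply: aTB || apply: aBT || assumption) ]).

Lemma Gstep_at m v g : Gstep m v g (aT m) =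
  if eps m then g (aT m) - exp (v (aB m)) * g (aB m) else g (aT m) / exp (v (aB m)).
Proof. rewrite /Gstep; case: (eps m); updsimp; by []. Qed.

Lemma Gstep_ab m v g : Gstep m v g (aB m) =
  if eps m then g (aB m) else g (aB m) - g (aT m) / exp (v (aB m)).
Proof. rewrite /Gstep; case: (eps m); updsimp; by []. Qed.

Lemma Gstep_oth m v g b : b <> aT m -> b <> aB m -> Gstep m v g b = g b.
Proof. move=> h1 h2; rewrite /Gstep; case: (eps m); updsimp; by []. Qed.

Lemma Ginv_at m v g : Ginv m v g (aT m) =
  if eps m then g (aT m) + exp (v (aB m)) * g (aB m) else g (aT m) * exp (v (aB m)).
Proof. rewrite /Ginv; case: (eps m); updsimp; by []. Qed.

Lemma Ginv_ab m v g : Ginv m v g (aB m) =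
  if eps m then g (aB m) else g (aB m) + g (aT m).
Proof. rewrite /Ginv; case: (eps m); updsimp; by []. Qed.

Lemma Ginv_oth m v g b : b <> aT m -> b <> aB m -> Ginv m v g b = g b.
Proof. move=> h1 h2; rewrite /Ginv; case: (eps m); updsimp; by []. Qed.

Lemma pt_cases m (b : A) : b = aT m \/ b = aB m \/ (b <> aT m /\ b <> aB m).
Proof.
case: (b =P aT m) => [->|h1]; first by left.
case: (b =P aB m) => [->|h2]; first by right; left.
by right; right.
Qed.

Lemma expne v : exp v <> 0.
Proof. have := exp_pos v; lra. Qed.

Lemma Gstep_Ginv m v y : Gstep m v (Ginv m v y) = y.
Proof.
apply: functional_extensionality => b.
have He := @expne (v (aB m)).
case: (pt_cases m b) => [->|[->|[h1 h2]]].
- rewrite Gstep_at Ginv_at Ginv_ab; case: (eps m); first ring. by field.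
- rewrite Gstep_ab Ginv_at Ginv_ab; case: (eps m); first ring. by field.
- by rewrite Gstep_oth // Ginv_oth.
Qed.

Lemma Ginv_Gstep m v y : Ginv m v (Gstep m v y) = y.
Proof.
apply: functional_extensionality => b.
have He := @expne (v (aB m)).
case: (pt_cases m b) => [->|[->|[h1 h2]]].
- rewrite Ginv_at Gstep_at Gstep_ab; case: (eps m); first ring. by field.
- rewrite Ginv_ab Gstep_at Gstep_ab; case: (eps m); first ring. by field.
- by rewrite Ginv_oth // Gstep_oth.
Qed.

Lemma G_surj w N x : exists lam, G w N lam = x.
Proof.
elim: N x => [|N IH] x; first by exists x.
case: (IH (Ginv N (V w N) x)) => lam H; exists lam => /=.
by rewrite H Gstep_Ginv.
Qed.

Lemma G_back_nonneg w n lam : (forall a, 0 <= G w n.+1 lam a) -> forall a, 0 <= G w n lam a.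
Proof.
move=> H a; rewrite -(Ginv_Gstep n (V w n) (G w n lam)).
have := H (aT n); have := H (aB n); rewrite /= => H1 H2.
have He := exp_pos (V w n (aB n)).
case: (pt_cases n a) => [->|[->|[h1 h2]]].
- rewrite Ginv_at; case: (eps n); nra.
- rewrite Ginv_ab; case: (eps n); nra.
- rewrite Ginv_oth //; exact: H.
Qed.

Lemma G_nonneg_down w n lam : (forall a, 0 <= G w n lam a) -> forall k, (k <= n)%N -> forall a, 0 <= G w k lam a.
Proof.
move=> H k Hk; have : (n - (n - k) = k)%N by rewrite subKn.
move=> <-; elim: (n - k)%N => [|j IH]; first by rewrite subn0.
case E: (n - j)%N => [|i].
  by move: IH; rewrite E; have -> : (n - j.+1 = 0)%N by rewrite subnS E.
have -> : (n - j.+1 = i)%N by rewrite subnS E.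
apply: G_back_nonneg; by rewrite -E.
Qed.

Lemma Gstep_lin m v c d x y : Gstep m v (fun a => c * x a + d * y a) = fun a => c * Gstep m v x a + d * Gstep m v y a.
Proof.
apply: functional_extensionality => b.
have He := @expne (v (aB m)).
case: (pt_cases m b) => [->|[->|[h1 h2]]].
- rewrite !Gstep_at; case: (eps m); first ring. by field.
- rewrite !Gstep_ab; case: (eps m); first ring. by field.
- by rewrite !Gstep_oth.
Qed.

Lemma G_lin w n c d x y : G w n (fun a => c * x a + d * y a) = fun a => c * G w n x a + d * G w n y a.
Proof. elim: n => [|n IH] //=; by rewrite IH Gstep_lin. Qed.

Lemma G_scal w n c x : G w n (fun a => c * x a) = fun a => c * G w n x a.
Proof.
have := G_lin w n c 0 x x.
have -> : (fun a => c * x a + 0 * x a) = (fun a => c * x a).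
  by apply: functional_extensionality => a; ring.
move=> ->; apply: functional_extensionality => a; ring.
Qed.

Lemma G_zero w n : G w n (fun _ => 0) = fun _ => 0.
Proof.
have := G_scal w n 0 (fun _ => 0).
have -> : (fun a : A => 0 * 0) = (fun _ => 0) by apply: functional_extensionality => a; ring.
move=> ->; apply: functional_extensionality => a; ring.
Qed.

Lemma V_at w m : V w m.+1 (aT m) = if eps m then V w m (aT m) else V w m (aT m) + V w m (aB m).
Proof. rewrite /=; case: (eps m); updsimp; by []. Qed.
Lemma V_ab w m : V w m.+1 (aB m) = if eps m then V w m (aB m) + V w m (aT m) else V w m (aB m).
Proof. rewrite /=; case: (eps m); updsimp; by []. Qed.
Lemma V_oth w m b : b <> aT m -> b <> aB m -> V w m.+1 b = V w m b.
Proof. move=> h1 h2; rewrite /=; case: (eps m); updsimp; by []. Qed.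

Lemma V_zero n : V (fun _ => 0) n = fun _ => 0.
Proof.
elim: n => [|n IH] //=; rewrite IH; apply: functional_extensionality => b.
rewrite /upd; case: (eps n); case: (_ == _); ring.
Qed.

Lemma total_step w m g :
  Rsum (fun a => (exp (V w m.+1 a) - 1) * Gstep m (V w m) g a) =
  Rsum (fun a => (exp (V w m a) - 1) * g a).
Proof.
apply: Rminus_diag_uniq.
rewrite (Rsum_two_diff _ _ (a:=aT m) (b:=aB m)); last first.
  by move=> c /eqP h1 /eqP h2; rewrite V_oth // Gstep_oth.
  by apply/eqP; apply: aTB.
rewrite V_at V_ab Gstep_at Gstep_ab.
have He := @expne (V w m (aB m)).
case: (eps m); rewrite ?exp_plus; first ring. field => //.
Qed.

Lemma total_G w n lam :
  Rsum (fun a => (exp (V w n a) - 1) * G w n lam a) = Rsum (fun a => (exp (w a) - 1) * lam a).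
Proof. elim: n => [|n IH] //=; by rewrite total_step. Qed.

Lemma std_step w m g :
  Rsum (fun a => Gstep m (fun _ => 0) g a * V w m.+1 a) = Rsum (fun a => g a * V w m a).
Proof.
apply: Rminus_diag_uniq.
rewrite (Rsum_two_diff _ _ (a:=aT m) (b:=aB m)); last first.
  by move=> c /eqP h1 /eqP h2; rewrite V_oth // Gstep_oth.
  by apply/eqP; apply: aTB.
rewrite V_at V_ab Gstep_at Gstep_ab exp_0.
case: (eps m); field.
Qed.

Lemma std_G w n lam :
  Rsum (fun a => G (fun _ => 0) n lam a * V w n a) = Rsum (fun a => lam a * w a).
Proof.
elim: n => [|n IH] //=; rewrite V_zero in IH *.
by rewrite std_step.
Qed.

End Dyn.

Definition isz (r : R) : bool := if Req_dec_T r 0 then true else false.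
Lemma iszP r : isz r = true <-> r = 0.
Proof. rewrite /isz; case: Req_dec_T => //. Qed.

Section Pos.
Variable A : finType.
Variable pi : comb_data A.
Variable eps : nat -> bool.
Variable a0 : A.
Hypothesis Hv : valid_comb pi.
Hypothesis Hc : inf_complete pi eps.
Variable w lam : A -> R.
Hypothesis Hnn : forall n a, 0 <= G pi eps a0 w n lam a.
Hypothesis Hne : exists a, lam a <> 0.

Local Notation aT m := (at_ pi eps a0 m).
Local Notation aB m := (ab_ pi eps a0 m).
Local Notation Gn n := (G pi eps a0 w n lam).
Local Notation e m := (exp (V pi eps a0 w m (aB m))).

Definition Zs n : {set A} := [set a | isz (Gn n a)].

Lemma inZ n a : a \in Zs n <-> Gn n a = 0.
Proof. by rewrite inE; apply: iszP. Qed.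

Lemma divnn x y : 0 <= x -> 0 < y -> 0 <= x / y.
Proof. move=> h1 h2; apply: Rmult_le_pos => //; left; exact: Rinv_0_lt_compat. Qed.

Lemma div0 x y : 0 < y -> x / y = 0 -> x = 0.
Proof. move=> h E; have := Rinv_neq_0_compat y; move: E; rewrite /Rdiv => E.
case: (Rmult_integral _ _ E) => // h2 h3; exfalso; apply: h3 => //; lra. Qed.

Lemma Zmono n a : a \in Zs n -> a \in Zs n.+1.
Proof.
rewrite !inZ => H0.
have H1 := Hnn n.+1 a; move: H1 => /=.
have Ha := Hnn n (aT n); have Hb := Hnn n (aB n).
have He := exp_pos (V pi eps a0 w n (aB n)).
move: H0; case: (pt_cases pi eps a0 n a) => [->|[->|[h1 h2]]] H0.
- rewrite (Gstep_at a0 Hv Hc) H0; case: (eps n) => H1; last by rewrite /Rdiv; ring.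
  nra.
- rewrite (Gstep_ab a0 Hv Hc) H0; case: (eps n) => H1 //.
  have := divnn Ha He; lra.
- by move=> _; rewrite Gstep_oth.
Qed.

Lemma Zmono_le n k : (n <= k)%N -> Zs n \subset Zs k.
Proof.
move=> Hk; apply/subsetP => a; elim: k Hk => [|k IH].
  by rewrite leqn0 => /eqP ->.
rewrite leq_eqVlt => /orP [/eqP -> //|]; rewrite ltnS => /IH H /H; exact: Zmono.
Qed.

Lemma Zclos n : winner pi eps a0 n \in Zs n -> loser pi eps a0 n \in Zs n.
Proof.
rewrite !inZ /winner /loser.
have H1 := Hnn n.+1 (if eps n then aT n else aB n); move: H1 => /=.
have Ha := Hnn n (aT n); have Hb := Hnn n (aB n).
have He := exp_pos (V pi eps a0 w n (aB n)).
case E: (eps n) => H1 H0.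
- move: H1; rewrite (Gstep_at a0 Hv Hc) E H0 => H1; nra.
- move: H1; rewrite (Gstep_ab a0 Hv Hc) E H0 => H1.
  have := divnn Ha He => H2; apply: (div0 He); lra.
Qed.

Lemma Zfull n : (forall a, Gn n a = 0) -> forall a, lam a = 0.
Proof.
elim: n => [|n IH] H; first exact: H.
apply: IH => a.
have : Gn n = Ginv pi eps a0 n (V pi eps a0 w n) (Gn n.+1) by rewrite /= Ginv_Gstep.
move=> ->; case: (pt_cases pi eps a0 n a) => [->|[->|[h1 h2]]].
- rewrite (Ginv_at a0 Hv Hc) !H; case: (eps n); ring.
- rewrite (Ginv_ab a0 Hv Hc) !H; case: (eps n); ring.
- by rewrite Ginv_oth // H.
Qed.

Lemma stab m : forall n, (#|A| - #|Zs n| <= m)%N -> exists K, (n <= K)%N /\ forall k, (K <= k)%N -> Zs k = Zs K.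
Proof.
elim: m => [|m IH] n Hm.
  case: (classic (forall k, (n <= k)%N -> Zs k = Zs n)) => [H|H]; first by exists n.
  exfalso; apply: H => k Hk; apply/eqP; rewrite eq_sym eqEcard Zmono_le //=.
  have := max_card (mem (Zs k)); move: Hm; rewrite leqn0 subn_eq0 => h1 h2.
  exact: leq_trans h2 h1.
case: (classic (forall k, (n <= k)%N -> Zs k = Zs n)) => [H|H]; first by exists n.
have [k [Hk Hne']] : exists k, (n <= k)%N /\ Zs k <> Zs n.
  apply: NNPP => H'; apply: H => k Hk; apply: NNPP => H2; apply: H'; by exists k.
have Hp : Zs n \proper Zs k by rewrite properEneq Zmono_le // andbT; apply/eqP => E; apply: Hne'.
have Hlt := proper_card Hp.
have Hk' : (#|A| - #|Zs k| <= m)%N.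
  have := max_card (mem (Zs k)) => hc.
  move/leP: Hm => Hm; move/ltP: Hlt => Hlt'; move/leP: hc => hc.
  apply/leP; rewrite -!minusE in Hm *; lia.
case: (IH k Hk') => K [h1 h2]; exists K; split => //; exact: leq_trans h1.
Qed.

Lemma pos_lemma n a : 0 < Gn n a.
Proof.
case: (Rle_lt_or_eq_dec _ _ (Hnn n a)) => // /esym Ha; exfalso.
have aZ : a \in Zs n by apply/inZ.
case: (stab (m := #|A|) (n := n)) => [|K [hK HK]]; first by apply: leq_subr.
have aZK : a \in Zs K by move: aZ; apply/subsetP; apply: Zmono_le.
have [y yZ] : exists y, y \notin Zs K.
  apply: NNPP => H; case: Hne => b Hb; apply: Hb.
  apply: (Zfull (n := K)) => c; apply/inZ; apply: NNPP => Hc0; apply: H; exists c; by apply/negP.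
case: (complete_two Hc K) => t1 [t2 [t3 [h1 [h2 [h3 [s1 s2]]]]]].
case: (s1 y) => k1 [k1a [k1b k1w]].
case: (s2 a) => k2 [k2a [k2b k2w]].
rewrite (winner_eq a0 Hv Hc) in k1w; rewrite (winner_eq a0 Hv Hc) in k2w; case: k1w => k1w; case: k2w => k2w.
have HZ : forall j, (K <= j)%N -> Zs j = Zs K by exact: HK.
have Hinv : forall j, winner pi eps a0 (k1 + j) \notin Zs K.
  elim => [|j IH]; first by rewrite addn0 k1w.
  apply/negP => Hw; move/negP: IH; apply.
  have Kj : (K <= (k1 + j).+1)%N.
    apply: leq_trans (leqnSn _); apply: leq_trans (leq_addr _ _); exact: leq_trans k1a.
  rewrite -(HZ _ Kj) in Hw *.
  rewrite addnS in Hw Kj *.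
  have Hl := Zclos Hw.
  case: (winner_last a0 Hv Hc (k1 + j)) => ->;
  case: (wl_last pi eps a0 (k1 + j).+1) => [[E1 E2]|[E1 E2]];
  [ by rewrite -E1 | by rewrite -E2 | by rewrite -E2 | by rewrite -E1 ].
have := Hinv (k2 - k1)%N; rewrite subnKC; first by rewrite k2w aZK.
apply: ltnW; apply: leq_trans k2a; exact: leq_trans k1b (leqnn _).
Qed.

End Pos.

Section Link.
Variable A : finType.
Variable pi : comb_data A.
Variable eps : nat -> bool.
Variable a0 : A.
Hypothesis Hv : valid_comb pi.
Hypothesis Hc : inf_complete pi eps.
Variable w : A -> R.

Local Notation aT m := (at_ pi eps a0 m).
Local Notation aB m := (ab_ pi eps a0 m).
Local Notation Gn n lam := (G pi eps a0 w n lam).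
Local Notation Vn n := (V pi eps a0 w n).

Definition aff n lam : aiem A :=
  AIem (P pi eps n) (Gn n lam) (fun b => exp (Vn n b) * Gn n lam b).

Lemma sum_lt_last (p : A -> nat) a (f : A -> R) : vf p -> lastl p = Some a ->
  \big[Rplus/R0]_(b | (p b < p a)%N) f b = Rsum f - f a.
Proof.
move=> Hp Ha.
have E : \big[Rplus/R0]_(b | (p b < p a)%N) f b = \big[Rplus/R0]_(b | b != a) f b.
  by apply: eq_bigl => b; rewrite (lastl_lt b Hp Ha).
rewrite E (Rsum_D1 f a); ring.
Qed.

Lemma ut_eq n lam : u_top (aff n lam) (aT n) = Rsum (Gn n lam) - Gn n lam (aT n).
Proof.
rewrite /u_top /aff /=; apply: sum_lt_last; first exact: (P_vc a0 Hv Hc n).1.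
exact: (at_eq a0 Hv Hc).
Qed.

Lemma ub_eq n lam : u_bot (aff n lam) (aB n) =
  Rsum (fun b => exp (Vn n b) * Gn n lam b) - exp (Vn n (aB n)) * Gn n lam (aB n).
Proof.
rewrite /u_bot /aff /=; apply: sum_lt_last; first exact: (P_vc a0 Hv Hc n).2.
exact: (ab_eq a0 Hv Hc).
Qed.

Lemma tot_eq n lam : Rsum lam = Rsum (fun a => exp (w a) * lam a) ->
  Rsum (fun b => exp (Vn n b) * Gn n lam b) = Rsum (Gn n lam).
Proof.
move=> H; have := total_G a0 Hv Hc w n lam.
have E1 : forall (u g : A -> R), Rsum (fun a => (exp (u a) - 1) * g a) = Rsum (fun a => exp (u a) * g a) - Rsum g.
  move=> u g; rewrite -Rsum_sub; apply: Rsum_ext => a; ring.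
rewrite !E1 H => E; lra.
Qed.

Lemma aTB' m : aT m <> aB m.
Proof. by apply/eqP; apply: (at_ab a0 Hv Hc). Qed.

Lemma upd_same' (f : A -> R) a x : upd f a x a = x.
Proof. by rewrite /upd eqxx. Qed.
Lemma upd_other' (f : A -> R) a x b : b <> a -> upd f a x b = f b.
Proof. by move=> H; rewrite /upd; case: (b =P a). Qed.

Lemma top_state n lam : eps n = true -> Gn n lam (aT n) <> 0 ->
  AIem ((P pi eps n).1, ins_after (P pi eps n).2 (aT n) (aB n))
    (upd (Gn n lam) (aT n) (Gn n lam (aT n) - exp (Vn n (aB n)) * Gn n lam (aB n)))
    (upd (upd (fun b => exp (Vn n b) * Gn n lam b) (aB n)
       ((exp (Vn n (aT n)) * Gn n lam (aT n)) / Gn n lam (aT n) * (exp (Vn n (aB n)) * Gn n lam (aB n))))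
       (aT n) (exp (Vn n (aT n)) * Gn n lam (aT n) -
          (exp (Vn n (aT n)) * Gn n lam (aT n)) / Gn n lam (aT n) * (exp (Vn n (aB n)) * Gn n lam (aB n))))
  = aff n.+1 lam.
Proof.
move=> E Hz; rewrite /aff (P_step a0 Hv Hc) /= /Gstep E; congr AIem.
apply: functional_extensionality => b.
have HTB := aTB' (m:=n).
have n1 : (aT n == aB n) = false by apply/eqP.
have n2 : (aB n == aT n) = false by apply/eqP => H; apply: HTB.
case: (pt_cases pi eps a0 n b) => [->|[->|[h1 h2]]].
- rewrite /upd eqxx n1; field => //.
- rewrite /upd eqxx n2 exp_plus; field => //.
- have m1 : (b == aT n) = false by apply/eqP.
  have m2 : (b == aB n) = false by apply/eqP.
  by rewrite /upd m1 m2.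
Qed.

Lemma bot_state n lam : eps n = false -> Gn n lam (aB n) <> 0 ->
  AIem (ins_after (P pi eps n).1 (aB n) (aT n), (P pi eps n).2)
    (upd (upd (Gn n lam) (aT n) (Gn n lam (aT n) /
        ((exp (Vn n (aB n)) * Gn n lam (aB n)) / Gn n lam (aB n))))
       (aB n) (Gn n lam (aB n) - Gn n lam (aT n) /
        ((exp (Vn n (aB n)) * Gn n lam (aB n)) / Gn n lam (aB n))))
    (upd (fun b => exp (Vn n b) * Gn n lam b) (aB n)
       (exp (Vn n (aB n)) * Gn n lam (aB n) - Gn n lam (aT n)))
  = aff n.+1 lam.
Proof.
move=> E Hz.
have He := exp_pos (Vn n (aB n)).
have Hs : (exp (Vn n (aB n)) * Gn n lam (aB n)) / Gn n lam (aB n) = exp (Vn n (aB n)) by field.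
rewrite Hs /aff (P_step a0 Hv Hc) /= /Gstep E; congr AIem.
apply: functional_extensionality => b.
have HTB := aTB' (m:=n).
have n1 : (aT n == aB n) = false by apply/eqP.
have n2 : (aB n == aT n) = false by apply/eqP => H; apply: HTB.
case: (pt_cases pi eps a0 n b) => [->|[->|[h1 h2]]].
- rewrite /upd eqxx n1 exp_plus; field; lra.
- rewrite /upd eqxx n2; field; lra.
- have m1 : (b == aT n) = false by apply/eqP.
  have m2 : (b == aB n) = false by apply/eqP.
  by rewrite /upd m1 m2.
Qed.

Lemma rv_step_unfold n lam : rv_step (aff n lam) =
  let T := aff n lam in
  let at0 := aT n in let ab := aB n in
  let pi0 := ai_pi T in let lt := ai_lt T in let lb := ai_lb T in
      if Rlt_dec (u_top T at0) (u_bot T ab) then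
        let s := Rdiv (lb at0) (lt at0) in
        Some (true, AIem (pi0.1, ins_after pi0.2 at0 ab)
                         (upd lt at0 (lt at0 - lb ab))
                         (upd (upd lb ab (s * lb ab)) at0 (lb at0 - s * lb ab)))
      else if Rlt_dec (u_bot T ab) (u_top T at0) then
        let s := Rdiv (lb ab) (lt ab) in
        Some (false, AIem (ins_after pi0.1 ab at0, pi0.2)
                          (upd (upd lt at0 (Rdiv (lt at0) s)) ab (lt ab - Rdiv (lt at0) s))
                          (upd lb ab (lb ab - lt at0)))
      else None.
Proof.
rewrite /rv_step.
have -> : ai_pi (aff n lam) = P pi eps n by [].
by rewrite (at_eq a0 Hv Hc) (ab_eq a0 Hv Hc).
Qed.

Lemma Gn_succ_win n lam : Gn n.+1 lam (winner pi eps a0 n) =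
  if eps n then Gn n lam (aT n) - exp (Vn n (aB n)) * Gn n lam (aB n)
  else Gn n lam (aB n) - Gn n lam (aT n) / exp (Vn n (aB n)).
Proof.
rewrite /winner /=; case E: (eps n).
  by rewrite (Gstep_at a0 Hv Hc) E.
by rewrite (Gstep_ab a0 Hv Hc) E.
Qed.

Lemma step_ok n lam : Rsum lam = Rsum (fun a => exp (w a) * lam a) ->
  (forall a, 0 < Gn n lam a) -> 0 < Gn n.+1 lam (winner pi eps a0 n) ->
  rv_step (aff n lam) = Some (eps n, aff n.+1 lam).
Proof.
move=> Htot Hpos Hw; rewrite rv_step_unfold /=.
rewrite ut_eq ub_eq tot_eq //.
move: Hw; rewrite Gn_succ_win.
have Ha := Hpos (aT n); have Hb := Hpos (aB n); have He := exp_pos (Vn n (aB n)).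
case E: (eps n) => Hw.
- case: Rlt_dec => H; last by exfalso; apply: H; lra.
  rewrite -(top_state E) //; lra.
- have Hw' : Gn n lam (aT n) < exp (Vn n (aB n)) * Gn n lam (aB n).
    have : Gn n lam (aT n) / exp (Vn n (aB n)) < Gn n lam (aB n) by lra.
    move/(Rmult_lt_compat_r (exp (Vn n (aB n))) _ _ He).
    rewrite /Rdiv Rmult_assoc Rinv_l; last lra. lra.
  case: Rlt_dec => H; first by exfalso; lra.
  case: Rlt_dec => H2; last by exfalso; apply: H2; lra.
  rewrite -(bot_state E) //; lra.
Qed.

Lemma step_inv n lam e T' : Rsum lam = Rsum (fun a => exp (w a) * lam a) ->
  (forall a, 0 < Gn n lam a) -> rv_step (aff n lam) = Some (e, T') -> e = eps n ->
  T' = aff n.+1 lam /\ 0 < Gn n.+1 lam (winner pi eps a0 n).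
Proof.
move=> Htot Hpos; rewrite Gn_succ_win rv_step_unfold /= ut_eq ub_eq tot_eq //.
have Ha := Hpos (aT n); have Hb := Hpos (aB n); have He := exp_pos (Vn n (aB n)).
case: Rlt_dec => H1.
  move=> [<- <-] E; rewrite -E; split; first by rewrite -(top_state (esym E)) //; lra.
  lra.
case: Rlt_dec => H2 //.
move=> [<- <-] E; rewrite -E; split; first by rewrite -(bot_state (esym E)) //; lra.
have : Gn n lam (aT n) / exp (Vn n (aB n)) < Gn n lam (aB n).
  apply: (Rmult_lt_reg_r (exp (Vn n (aB n)))) => //.
  rewrite /Rdiv Rmult_assoc Rinv_l; last lra. lra.
lra.
Qed.

Lemma Gstep_pos_other n lam b : (forall a, 0 < Gn n lam a) -> b <> winner pi eps a0 n -> 0 < Gn n.+1 lam b.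
Proof.
move=> Hpos Hb; rewrite /= ; move: Hb; rewrite /winner.
have He := exp_pos (Vn n (aB n)).
case: (pt_cases pi eps a0 n b) => [->|[->|[h1 h2]]]; case E: (eps n) => Hb //.
- rewrite (Gstep_at a0 Hv Hc) E. apply: Rdiv_lt_0_compat => //.
- rewrite (Gstep_ab a0 Hv Hc) E //.
- rewrite Gstep_oth //.
- rewrite Gstep_oth //.
Qed.

Lemma path_iff lam : (forall a, 0 < lam a) -> Rsum lam = Rsum (fun a => exp (w a) * lam a) ->
  (rv_path_is (aff_of pi lam w) eps <-> forall n a, 0 < Gn n lam a).
Proof.
move=> Hl Htot; split.
- case=> S [S0 HS].
  have : forall n, S n = aff n lam /\ forall a, 0 < Gn n lam a.
    elim => [|n [IH1 IH2]]; first by split.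
    have := HS n; rewrite IH1 => H.
    case: (step_inv Htot IH2 H (erefl _)) => h1 h2; split => // b.
    case: (b =P winner pi eps a0 n) => [->|hb] //; exact: Gstep_pos_other.
  by move=> H n; case: (H n).
- move=> H; exists (fun n => aff n lam); split; first by [].
  move=> n; apply: step_ok => //; exact: H.
Qed.

End Link.

Section Topo.
Variable A : finType.

Definition cont (f : (A -> R) -> R) := forall x e, 0 < e -> exists d, 0 < d /\
  forall y, (forall a, Rabs (y a - x a) < d) -> Rabs (f y - f x) < e.

Definition closed_set (K : (A -> R) -> Prop) := forall x, ~ K x -> exists e, 0 < e /\
  forall y, (forall a, Rabs (y a - x a) < e) -> ~ K y.

Lemma cont_proj a : cont (fun y => y a).
Proof. move=> x e he; exists e; split => // y H; exact: H. Qed.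

Lemma cont_const c : cont (fun _ => c).
Proof. move=> x e he; exists 1; split; first lra. move=> y _; rewrite Rminus_diag Rabs_R0 //. Qed.

Lemma cont_add f g : cont f -> cont g -> cont (fun y => f y + g y).
Proof.
move=> hf hg x e he.
case: (hf x (e/2)) => [|d1 [hd1 H1]]; first lra.
case: (hg x (e/2)) => [|d2 [hd2 H2]]; first lra.
exists (Rmin d1 d2); split; first by apply: Rmin_pos.
move=> y Hy.
have h1 := H1 y (fun a => Rlt_le_trans _ _ _ (Hy a) (Rmin_l _ _)).
have h2 := H2 y (fun a => Rlt_le_trans _ _ _ (Hy a) (Rmin_r _ _)).
have -> : f y + g y - (f x + g x) = (f y - f x) + (g y - g x) by ring.
apply: Rle_lt_trans (Rabs_triang _ _) _; lra.
Qed.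

Lemma cont_scal c f : cont f -> cont (fun y => c * f y).
Proof.
move=> hf x e he.
have hc := Rabs_pos c.
case: (hf x (e / (Rabs c + 1))) => [|d [hd H]].
  apply: Rdiv_lt_0_compat => //; lra.
exists d; split => // y Hy.
rewrite -Rmult_minus_distr_l Rabs_mult.
have := H y Hy => h.
have : Rabs c * Rabs (f y - f x) <= Rabs c * (e / (Rabs c + 1)).
  apply: Rmult_le_compat_l => //; lra.
have : Rabs c * (e / (Rabs c + 1)) < e.
  apply: (Rmult_lt_reg_r (Rabs c + 1)); first lra.
  rewrite Rmult_assoc /Rdiv Rmult_assoc Rinv_l; last lra.
  nra.
lra.
Qed.

Lemma cont_sub f g : cont f -> cont g -> cont (fun y => f y - g y).
Proof.
move=> hf hg; have := cont_add hf (cont_scal (-1) hg).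
move=> H x e he; case: (H x e he) => d [hd Hd]; exists d; split => // y Hy.
have := Hd y Hy; have -> : f y + -1 * g y - (f x + -1 * g x) = f y - g y - (f x - g x) by ring.
by [].
Qed.

Lemma cont_sum (F : A -> (A -> R) -> R) : (forall a, cont (F a)) -> cont (fun y => Rsum (fun a => F a y)).
Proof.
move=> HF.
suff : forall s : seq A, cont (fun y => \big[Rplus/R0]_(a <- s) F a y) by apply.
elim => [|a s IH].
  have -> : (fun y => \big[Rplus/R0]_(a <- [::]) F a y) = fun _ => 0.
    by apply: functional_extensionality => y; rewrite big_nil.
  exact: cont_const.
have -> : (fun y => \big[Rplus/R0]_(b <- a :: s) F b y) = fun y => F a y + \big[Rplus/R0]_(b <- s) F b y.
  by apply: functional_extensionality => y; rewrite big_cons.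
exact: cont_add.
Qed.

Lemma closed_ge f : cont f -> closed_set (fun x => 0 <= f x).
Proof.
move=> hf x hx; have hlt : f x < 0 by lra.
case: (hf x (- f x)) => [|d [hd H]]; first lra.
exists d; split => // y Hy; have := H y Hy => h; have := Rabs_def2 _ _ h; lra.
Qed.

Lemma closed_eq f c : cont f -> closed_set (fun x => f x = c).
Proof.
move=> hf x hx.
case: (hf x (Rabs (f x - c))) => [|d [hd H]].
  apply: Rabs_pos_lt => h; apply: hx; lra.
exists d; split => // y Hy E; have := H y Hy; rewrite E.
have -> : c - f x = - (f x - c) by ring.
rewrite Rabs_Ropp; lra.
Qed.

Lemma closed_and K1 K2 : closed_set K1 -> closed_set K2 -> closed_set (fun x => K1 x /\ K2 x).
Proof.
move=> h1 h2 x hx.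
case: (classic (K1 x)) => H1.
  have H2 : ~ K2 x by move=> H2; apply: hx.
  case: (h2 x H2) => e [he He]; exists e; split => // y Hy [_ ?]; exact: (He y Hy).
case: (h1 x H1) => e [he He]; exists e; split => // y Hy [? _]; exact: (He y Hy).
Qed.

Lemma closed_all (I : Type) (K : I -> (A -> R) -> Prop) : (forall i, closed_set (K i)) -> closed_set (fun x => forall i, K i x).
Proof.
move=> h x hx.
have [i Hi] : exists i, ~ K i x by apply: NNPP => H; apply: hx => i; apply: NNPP => H'; apply: H; exists i.
case: (h i x Hi) => e [he He]; exists e; split => // y Hy H; exact: (He y Hy (H i)).
Qed.

(* compactness of closed subsets of the unit cube *)
Section Cpt.
Variable K : (A -> R) -> Prop.
Hypothesis HK : closed_set K.
Hypothesis Hbox : forall x, K x -> forall a, 0 <= x a <= 1.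
Variable I : Type.
Variable U : I -> (A -> R) -> Prop.
Hypothesis HU : forall i, Defs.open_set (U i).

Definition covered (S : (A -> R) -> Prop) := exists l : list I, forall x, S x -> exists i, In i l /\ U i x.
Definition box (c : A -> R) r x := forall a, c a <= x a <= c a + r.
Definition bad c r := ~ covered (fun x => K x /\ box c r x).

Lemma covered_mono (S S' : (A -> R) -> Prop) : (forall x, S x -> S' x) -> covered S' -> covered S.
Proof. move=> H [l Hl]; exists l => x /H; exact: Hl. Qed.

Lemma covered_union (T : eqType) (s : seq T) (S : T -> (A -> R) -> Prop) :
  (forall t, t \in s -> covered (S t)) -> covered (fun x => exists t, t \in s /\ S t x).
Proof.
elim: s => [|t s IH] H.
  by exists nil => x [t []].
case: (H t (mem_head _ _)) => l1 H1.
case: IH => [u hu|l2 H2]; first by apply: H; rewrite in_cons hu orbT.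
exists (l1 ++ l2) => x [u [hu Hu]].
move: hu; rewrite in_cons => /orP [/eqP E|hu].
  subst u; case: (H1 x Hu) => i [hi Ui]; exists i; split => //; apply: in_or_app; by left.
case: (H2 x (ex_intro _ u (conj hu Hu))) => i [hi Ui]; exists i; split => //; apply: in_or_app; by right.
Qed.

Lemma split_bad c r : 0 < r -> bad c r -> exists c', bad c' (r/2) /\ forall a, c a <= c' a <= c a + r/2.
Proof.
move=> hr hb; apply: NNPP => H; apply: hb.
pose cf (f : {ffun A -> bool}) a := c a + (if f a then r/2 else 0).
have Hcf : forall f, covered (fun x => K x /\ box (cf f) (r/2) x).
  move=> f; apply: NNPP => Hn; apply: H; exists (cf f); split => // a.
  rewrite /cf; case: (f a); lra.
apply: (covered_mono (S' := fun x => exists f, f \in enum {ffun A -> bool} /\ (K x /\ box (cf f) (r/2) x))).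
  move=> x [Kx Bx].
  exists [ffun a => if Rlt_dec (c a + r/2) (x a) then true else false]; split; first by rewrite mem_enum.
  split => // a; rewrite /cf ffunE; have := Bx a.
  case: Rlt_dec => h /= Hb; lra.
by apply: covered_union => f _; apply: Hcf.
Qed.

Lemma next_ex c r : exists c', (0 < r /\ bad c r) -> bad c' (r/2) /\ forall a, c a <= c' a <= c a + r/2.
Proof.
case: (classic (0 < r /\ bad c r)) => [[h1 h2]|h].
  case: (split_bad h1 h2) => c' hc; by exists c'.
by exists c.
Qed.

Definition nextc c r := proj1_sig (constructive_indefinite_description _ (next_ex c r)).
Lemma nextc_spec c r : (0 < r /\ bad c r) -> bad (nextc c r) (r/2) /\ forall a, c a <= nextc c r a <= c a + r/2.
Proof. rewrite /nextc; case: constructive_indefinite_description => /= c' H; exact: H. Qed.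

Definition rr n := (/2) ^ n.
Lemma rr_pos n : 0 < rr n.
Proof. apply: pow_lt; lra. Qed.
Lemma rr_S n : rr n.+1 = rr n / 2.
Proof. rewrite /rr /=; field. Qed.

Fixpoint cs n : A -> R := match n with 0%nat => fun _ => 0 | S m => nextc (cs m) (rr m) end.

Lemma lim_le (u : nat -> R) l n B : Un_cv u l -> (forall m, (n <= m)%coq_nat -> u m <= B) -> l <= B.
Proof.
move=> Hu Hm; apply: Rnot_lt_le => Hl.
case: (Hu (l - B)) => [|N HN]; first lra.
have := HN (Nat.max N n) (Nat.le_max_l _ _).
have := Hm (Nat.max N n) (Nat.le_max_r _ _).
rewrite /R_dist => h1 h2; have := Rabs_def2 _ _ h2; lra.
Qed.

Lemma rr_small e : 0 < e -> exists n, rr n < e.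
Proof.
move=> he; case: (pow_lt_1_zero (/2) _ e he) => [|N HN].
  rewrite Rabs_right; lra.
exists N; have := HN N (Nat.le_refl _); rewrite Rabs_right //; left; exact: rr_pos.
Qed.

Lemma box_dist c r y z a : box c r y -> box c r z -> Rabs (y a - z a) <= r.
Proof. move=> hy hz; have := hy a; have := hz a => h1 h2; apply: Rabs_le; lra. Qed.

Lemma cover_ok (Hcov : forall x, K x -> exists i, U i x) : covered K.
Proof.
apply: NNPP => H.
have inv : forall n, bad (cs n) (rr n) /\ (forall a, 0 <= cs n a /\ cs n a + rr n <= 1).
  elim => [|n [IH1 IH2]].
    split.
      move=> Hc; apply: H; case: Hc => l Hl; exists l => x Kx; apply: Hl; split => // a.
      rewrite /rr /=; have := Hbox Kx a; lra.
    by move=> a; rewrite /rr /=; lra.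
  have hr := rr_pos n.
  case: (nextc_spec (conj hr IH1)) => h1 h2; rewrite rr_S; split => //= a.
  have := h2 a; have := IH2 a; lra.
have mono : forall n a, cs n a <= cs n.+1 a.
  move=> n a /=; have hr := rr_pos n.
  case: (nextc_spec (conj hr (inv n).1)) => _ h2; have := h2 a; lra.
have tail : forall n k a, cs n a <= cs (n + k) a /\ cs (n + k) a + rr (n + k) <= cs n a + rr n.
  move=> n k a; elim: k => [|k [IH1 IH2]]; first by rewrite addn0; lra.
  rewrite addnS /=; have hr := rr_pos (n + k).
  case: (nextc_spec (conj hr (inv (n + k)%N).1)) => _ h2; have := h2 a; rewrite rr_S; lra.
have ub : forall a, has_ub (fun n => cs n a).
  move=> a; exists 1 => y [i ->]; have := (inv i).2 a; have := rr_pos i; lra.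
pose x := fun a => proj1_sig (growing_cv (fun n => cs n a) (mono^~ a) (ub a)).
have Hx : forall a, Un_cv (fun n => cs n a) (x a).
  by move=> a; rewrite /x; case: growing_cv.
have inbox : forall n, box (cs n) (rr n) x.
  move=> n a; split.
    exact: (growing_ineq _ _ (mono^~ a) (Hx a)).
  apply: (lim_le (n := n) (Hx a)) => m /leP Hm.
  have := tail n (m - n)%N a; rewrite subnKC // => [[_ h]]; have := rr_pos m; lra.
have Kx : K x.
  apply: NNPP => Hn; case: (HK Hn) => e [he He].
  case: (rr_small he) => n hn.
  have [y [Ky By]] : exists y, K y /\ box (cs n) (rr n) y.
    apply: NNPP => Hy; apply: (inv n).1; exists nil => y Hy'; exfalso; apply: Hy; by exists y.
  apply: (He y) => // a; have := box_dist a By (inbox n); lra.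
case: (Hcov x Kx) => i Ui.
case: (HU Ui) => e [he He].
case: (rr_small he) => n hn.
apply: (inv n).1; exists (i :: nil) => y [Ky By]; exists i; split; first by left.
apply: He => a; have := box_dist a By (inbox n); lra.
Qed.

End Cpt.
Lemma compact_box (K : (A -> R) -> Prop) : closed_set K -> (forall x, K x -> forall a, 0 <= x a <= 1) ->
  compact_set K.
Proof. move=> HK Hb I U HU Hcov; exact: (cover_ok HK Hb HU Hcov). Qed.

End Topo.

Lemma cont_ext (A : finType) (f g : (A -> R) -> R) : (forall y, f y = g y) -> cont g -> cont f.
Proof. move=> H hg x e he; case: (hg x e he) => d [hd Hd]; exists d; split => // y Hy; rewrite !H; exact: Hd. Qed.

Lemma closed_ext (A : finType) (K K' : (A -> R) -> Prop) : (forall x, K x <-> K' x) -> closed_set K' -> closed_set K.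
Proof.
move=> H hK x hx; have hx' : ~ K' x by rewrite -H.
case: (hK x hx') => e [he He]; exists e; split => // y Hy; rewrite H; exact: He.
Qed.

Lemma cont_G (A : finType) (pi : comb_data A) eps a0 (Hv : valid_comb pi) (Hc : inf_complete pi eps) w n a :
  cont (fun lam => G pi eps a0 w n lam a).
Proof.
elim: n a => [|n IH] a; first exact: cont_proj.
case: (pt_cases pi eps a0 n a) => [->|[->|[h1 h2]]].
- apply: (cont_ext (g := fun lam => if eps n then G pi eps a0 w n lam (at_ pi eps a0 n) -
     exp (V pi eps a0 w n (ab_ pi eps a0 n)) * G pi eps a0 w n lam (ab_ pi eps a0 n)
     else / exp (V pi eps a0 w n (ab_ pi eps a0 n)) * G pi eps a0 w n lam (at_ pi eps a0 n))).
    move=> y /=; rewrite (Gstep_at a0 Hv Hc); case: (eps n) => //; rewrite /Rdiv Rmult_comm //.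
  case: (eps n); [apply: cont_sub; [exact: IH | apply: cont_scal; exact: IH] | apply: cont_scal; exact: IH].
- apply: (cont_ext (g := fun lam => if eps n then G pi eps a0 w n lam (ab_ pi eps a0 n)
     else G pi eps a0 w n lam (ab_ pi eps a0 n) -
       / exp (V pi eps a0 w n (ab_ pi eps a0 n)) * G pi eps a0 w n lam (at_ pi eps a0 n))).
    move=> y /=; rewrite (Gstep_ab a0 Hv Hc); case: (eps n) => //; rewrite /Rdiv (Rmult_comm (G _ _ _ _ _ _ _)) //.
  case: (eps n); [exact: IH | apply: cont_sub; [exact: IH | apply: cont_scal; exact: IH]].
- apply: (cont_ext (g := fun lam => G pi eps a0 w n lam a)) => //.
  by move=> y /=; rewrite Gstep_oth.
Qed.

Lemma nested (A : finType) (K : nat -> (A -> R) -> Prop) : (forall N, closed_set (K N)) ->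
  (forall N x, K N.+1 x -> K N x) -> (forall N, exists x, K N x) ->
  (forall x, K 0%nat x -> forall a, 0 <= x a <= 1) -> exists x, forall N, K N x.
Proof.
move=> Hcl Hn Hne Hb; apply: NNPP => H.
have Hcpt := compact_box (Hcl 0%nat) Hb.
case: (Hcpt nat (fun N x => ~ K N x)).
- move=> N x hx; case: (Hcl N x hx) => e [he He]; exists e; split => //.
- move=> x _; apply: NNPP => H2; apply: H; exists x => N; apply: NNPP => H3; apply: H2; by exists N.
move=> l Hl.
have inM0 : forall l' N, In N l' -> (N <= fold_right Nat.max 0%nat l')%N.
  elim => // b l' IH N /= [->|hN]; apply/leP.
    exact: Nat.le_max_l.
  apply: Nat.le_trans (Nat.le_max_r b _); apply/leP; exact: IH.
pose M := fold_right Nat.max 0%nat l.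
have inM : forall N, In N l -> (N <= M)%N by move=> N; apply: inM0.
have down : forall N k x, K (N + k)%N x -> K N x.
  move=> N k x; elim: k => [|k IH]; first by rewrite addn0.
  rewrite addnS => h; apply: IH; exact: Hn.
case: (Hne M) => z Kz.
case: (Hl z (down 0%nat M z Kz)) => N [hN HN]; apply: HN.
by apply: (down N (M - N)%N); rewrite subnKC //; apply: inM.
Qed.

Lemma sign_of_sum (A : finType) (g u : A -> R) : (forall a, 0 < g a) -> Rsum (fun a => g a * u a) = 0 ->
  ((exists a, 0 < u a) -> exists b, u b < 0) /\ ((exists b, u b < 0) -> exists a, 0 < u a).
Proof.
move=> Hg Hs; split.
- move=> [a ha]; apply: NNPP => H.
  have Hnn : forall b, 0 <= g b * u b.
    move=> b; apply: Rmult_le_pos; first by left.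
    apply: Rnot_lt_le => hb; apply: H; by exists b.
  have := Rsum_ge_term a Hnn; have := Hg a => hg; nra.
- move=> [a ha]; apply: NNPP => H.
  have Hnn : forall b, 0 <= g b * (- u b).
    move=> b; apply: Rmult_le_pos; first by left.
    have : ~ 0 < u b by move=> hb; apply: H; exists b.
    lra.
  have := Rsum_ge_term a Hnn.
  rewrite (Rsum_ext (g := fun b => -1 * (g b * u b))); last by move=> b; ring.
  rewrite Rsum_scal Hs; have := Hg a => hg; nra.
Qed.

Lemma mk_pos (A : finType) (u : A -> R) :
  ((exists a, 0 < u a) -> exists b, u b < 0) -> ((exists b, u b < 0) -> exists a, 0 < u a) ->
  exists x : A -> R, (forall a, 0 < x a) /\ Rsum (fun a => x a * u a) = 0.
Proof.
move=> H1 H2.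
pose pos a := Rmax (u a) 0; pose neg a := Rmax (- u a) 0.
have hp : forall a, 0 <= pos a by move=> a; apply: Rmax_r.
have hn : forall a, 0 <= neg a by move=> a; apply: Rmax_r.
pose Pp := Rsum pos; pose Nn := Rsum neg.
exists (fun a => if Rlt_dec 0 (u a) then Nn else if Rlt_dec (u a) 0 then Pp else 1); split.
- move=> a; case: Rlt_dec => h1 /=.
    case: H1; first by exists a.
    move=> b hb; apply: Rlt_le_trans (Rsum_ge_term b hn).
    rewrite /neg Rmax_left; lra.
  case: Rlt_dec => h2 /=; last lra.
  case: H2; first by exists a.
  move=> b hb; apply: Rlt_le_trans (Rsum_ge_term b hp).
  rewrite /pos Rmax_left; lra.
- rewrite (Rsum_ext (g := fun a => Nn * pos a + (- Pp) * neg a)).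
    rewrite Rsum_lin /Pp /Nn; ring.
  move=> a; rewrite /pos /neg.
  case: Rlt_dec => h1 /=.
    rewrite Rmax_left; last lra. rewrite Rmax_right; last lra. ring.
  case: Rlt_dec => h2 /=.
    rewrite Rmax_right; last lra. rewrite Rmax_left; last lra. ring.
  have -> : u a = 0 by lra.
  rewrite Rmax_left; last lra. rewrite Ropp_0 Rmax_left; last lra. ring.
Qed.

Lemma sign_exp (A : finType) (v : A -> R) :
  (((exists a, 0 < v a) -> exists b, v b < 0) /\ ((exists b, v b < 0) -> exists a, 0 < v a)) <->
  (((exists a, 0 < exp (v a) - 1) -> exists b, exp (v b) - 1 < 0) /\
   ((exists b, exp (v b) - 1 < 0) -> exists a, 0 < exp (v a) - 1)).
Proof.
have E1 : forall r, 0 < r <-> 0 < exp r - 1.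
  move=> r; split => h.
    have := exp_increasing _ _ h; rewrite exp_0; lra.
  apply: exp_lt_inv; rewrite exp_0; lra.
have E2 : forall r, r < 0 <-> exp r - 1 < 0.
  move=> r; split => h.
    have := exp_increasing _ _ h; rewrite exp_0; lra.
  apply: exp_lt_inv; rewrite exp_0; lra.
split => [[h1 h2]|[h1 h2]]; split.
- move=> [a ha]; case: h1; first by exists a; rewrite E1.
  move=> b hb; exists b; by rewrite -E2.
- move=> [a ha]; case: h2; first by exists a; rewrite E2.
  move=> b hb; exists b; by rewrite -E1.
- move=> [a ha]; case: h1; first by exists a; rewrite -E1.
  move=> b hb; exists b; by rewrite E2.
- move=> [a ha]; case: h2; first by exists a; rewrite -E2.
  move=> b hb; exists b; by rewrite E1.
Qed.

Section Main.
Variable A : finType.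
Variable pi : comb_data A.
Variable eps : nat -> bool.
Variable a0 : A.
Hypothesis Hv : valid_comb pi.
Hypothesis Hc : inf_complete pi eps.

Local Notation Gw w n lam := (G pi eps a0 w n lam).
Local Notation Vw w n := (V pi eps a0 w n).
Local Notation z0 := (fun _ : A => 0).

Lemma Aff_char w lam : Aff pi eps w lam <->
  (forall a, 0 < lam a) /\ Rsum lam = Rsum (fun a => exp (w a) * lam a) /\ forall n a, 0 < Gw w n lam a.
Proof.
split.
- move=> [h1 [h2 h3]]; do 2 split => //.
  by rewrite -(path_iff a0 Hv Hc).
- move=> [h1 [h2 h3]]; do 2 split => //.
  by rewrite (path_iff a0 Hv Hc).
Qed.

Lemma Std_char lam : (forall a, 0 < lam a) ->
  (rv_path_is (std_iem pi lam) eps <-> forall n a, 0 < Gw z0 n lam a).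
Proof.
move=> h.
have -> : std_iem pi lam = aff_of pi lam z0.
  rewrite /std_iem /aff_of; congr AIem; apply: functional_extensionality => a; rewrite exp_0; ring.
apply: (path_iff a0 Hv Hc) => //.
by apply: Rsum_ext => a; rewrite exp_0; ring.
Qed.

Lemma sum1_ne (lam : A -> R) : Rsum lam = 1 -> exists a, lam a <> 0.
Proof.
move=> H; apply: NNPP => H'.
have : Rsum lam = 0.
  rewrite (Rsum_ext (g := fun _ => 0)) ?Rsum_zero // => a.
  apply: NNPP => h; apply: H'; by exists a.
lra.
Qed.

Lemma preimage w N (x : A -> R) : (forall a, 0 < x a) ->
  exists mu, (forall a, 0 <= mu a) /\ Rsum mu = 1 /\ (forall a, 0 <= Gw w N mu a) /\
    exists s, 0 < s /\ Gw w N mu = fun a => / s * x a.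
Proof.
move=> hx.
case: (G_surj a0 Hv Hc w N x) => mu0 H0.
have nn0 : forall a, 0 <= Gw w 0 mu0 a.
  move=> a; apply: (G_nonneg_down Hv Hc (n := N)) => // b; rewrite H0; left; exact: hx.
have [b hb] : exists b, 0 < mu0 b.
  apply: NNPP => H.
  have Ez : mu0 = z0.
    apply: functional_extensionality => a; have := nn0 a => /= h.
    have : ~ 0 < mu0 a by move=> h'; apply: H; exists a.
    lra.
  have := hx a0; rewrite -H0 Ez (G_zero a0 Hv Hc); lra.
set s := Rsum mu0.
have hs : 0 < s by apply: Rlt_le_trans hb (Rsum_ge_term b nn0).
have Hscal := G_scal a0 Hv Hc w N (/ s) mu0.
exists (fun a => / s * mu0 a); split.
  move=> a; apply: Rmult_le_pos; [left; exact: Rinv_0_lt_compat | exact: nn0].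
split; first by rewrite Rsum_scal -/s; field; lra.
split.
  move=> a; rewrite Hscal H0; apply: Rmult_le_pos; [left; exact: Rinv_0_lt_compat | left; exact: hx].
by exists s; split => //; rewrite Hscal H0.
Qed.

Lemma cont_lin (c : A -> R) : cont (fun mu : A -> R => Rsum (fun a => mu a * c a)).
Proof.
apply: (cont_sum (F := fun a mu => mu a * c a)) => a.
apply: (cont_ext (g := fun mu => c a * mu a)); first by move=> y; ring.
apply: cont_scal; exact: cont_proj.
Qed.

Lemma closed_K (w : A -> R) (c : A -> R) N : closed_set (fun mu : A -> R =>
  (forall a, 0 <= mu a) /\ Rsum mu = 1 /\ Rsum (fun a => mu a * c a) = 0 /\ forall a, 0 <= Gw w N mu a).
Proof.
apply: closed_and.
  apply: closed_all => a; apply: closed_ge; exact: cont_proj.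
apply: closed_and.
  apply: closed_eq; apply: (cont_sum (F := fun a mu => mu a)) => a; exact: cont_proj.
apply: closed_and.
  apply: closed_eq; exact: cont_lin.
apply: closed_all => a; apply: closed_ge; exact: (cont_G a0 Hv Hc).
Qed.

Lemma box_K (w : A -> R) (c : A -> R) N mu :
  (forall a, 0 <= mu a) /\ Rsum mu = 1 /\ Rsum (fun a => mu a * c a) = 0 /\ (forall a, 0 <= Gw w N mu a) ->
  forall a, 0 <= mu a <= 1.
Proof. move=> [h1 [h2 _]] a; split => //; rewrite -h2; exact: Rsum_ge_term. Qed.

Lemma limit_point (w c : A -> R) :
  (forall N, exists mu, (forall a, 0 <= mu a) /\ Rsum mu = 1 /\ Rsum (fun a => mu a * c a) = 0 /\
     forall a, 0 <= Gw w N mu a) ->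
  exists mu, (forall a, 0 < mu a) /\ Rsum mu = 1 /\ Rsum (fun a => mu a * c a) = 0 /\
     forall n a, 0 < Gw w n mu a.
Proof.
move=> Hne.
case: (nested (K := fun N mu => (forall a, 0 <= mu a) /\ Rsum mu = 1 /\ Rsum (fun a => mu a * c a) = 0 /\
     forall a, 0 <= Gw w N mu a)).
- move=> N; exact: closed_K.
- move=> N x [h1 [h2 [h3 h4]]]; do 3 split => //; exact: (G_back_nonneg Hv Hc h4).
- exact: Hne.
- move=> x; exact: box_K.
move=> mu Hmu.
have Hnn : forall n a, 0 <= Gw w n mu a by move=> n; case: (Hmu n) => _ [_ [_ h]].
have Hs := (Hmu 0%nat).2.1.
have Hpos := pos_lemma Hv Hc Hnn (sum1_ne Hs).
exists mu; split; first exact: (Hpos 0%nat).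
split => //; split; first exact: (Hmu 0%nat).2.2.1.
exact: Hpos.
Qed.

Theorem main_iff w : (exists lam, Aff pi eps w lam) <->
   (exists lam : A -> R, (forall a, 0 < lam a) /\
      Rsum (fun a => lam a * w a) = 0 /\
      rv_path_is (std_iem pi lam) eps).
Proof.
split.
- move=> [la /Aff_char [h1 [h2 h3]]].
  case: (limit_point (w := z0) (c := w)).
    move=> N.
    have HS : Rsum (fun a => Gw w N la a * (exp (Vw w N a) - 1)) = 0.
      rewrite (Rsum_ext (g := fun a => (exp (Vw w N a) - 1) * Gw w N la a)); last by move=> a; ring.
      rewrite (total_G a0 Hv Hc) (Rsum_ext (g := fun a => exp (w a) * la a - la a)).
        by rewrite Rsum_sub -h2; ring.
      by move=> a; ring.
    have sg := sign_of_sum (h3 N) HS.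
    rewrite -sign_exp in sg; case: sg => s1 s2.
    case: (mk_pos s1 s2) => x [hx Hx].
    case: (preimage z0 N hx) => mu [m1 [m2 [m3 [s [hs Hs]]]]].
    exists mu; do 2 (split => //); split => //.
    rewrite -(std_G a0 Hv Hc w N) Hs.
    rewrite (Rsum_ext (g := fun a => / s * (x a * Vw w N a))); last by move=> a; ring.
    by rewrite Rsum_scal Hx; ring.
  move=> mu [m1 [m2 [m3 m4]]]; exists mu; do 2 (split => //).
  by rewrite Std_char.
- move=> [mu [h1 [h2 h3]]].
  rewrite Std_char // in h3.
  case: (limit_point (w := w) (c := fun a => exp (w a) - 1)).
    move=> N.
    have HS : Rsum (fun a => Gw z0 N mu a * Vw w N a) = 0 by rewrite (std_G a0 Hv Hc).
    have sg := sign_of_sum (h3 N) HS.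
    rewrite sign_exp in sg; case: sg => s1 s2.
    case: (mk_pos s1 s2) => x [hx Hx].
    case: (preimage w N hx) => la [m1 [m2 [m3 [s [hs Hs]]]]].
    exists la; do 2 (split => //); split => //.
    rewrite (Rsum_ext (g := fun a => (exp (w a) - 1) * la a)); last by move=> a; ring.
    rewrite -(total_G a0 Hv Hc w N) Hs.
    rewrite (Rsum_ext (g := fun a => / s * (x a * (exp (Vw w N a) - 1)))); last by move=> a; ring.
    by rewrite Rsum_scal Hx; ring.
  move=> la [l1 [l2 [l3 l4]]]; exists la; apply/Aff_char; split => //; split => //.
  have : Rsum (fun a => exp (w a) * la a) - Rsum la = 0.
    rewrite -Rsum_sub -l3; apply: Rsum_ext => a; ring.
  lra.
Qed.

Theorem main_geom w : convex_set (Aff1 pi eps w) /\ compact_set (Aff1 pi eps w).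
Proof.
split.
- move=> x y t [/Aff_char [x1 [x2 x3]] x4] [/Aff_char [y1 [y2 y3]] y4] ht.
  split.
    apply/Aff_char; split.
      move=> a; have := x1 a; have := y1 a; nra.
    split.
      rewrite Rsum_lin (Rsum_ext (f := fun a => exp (w a) * (t * x a + (1 - t) * y a)) (g := fun a => t * (exp (w a) * x a) + (1 - t) * (exp (w a) * y a))).
        by rewrite Rsum_lin x2 y2.
      by move=> a; ring.
    move=> n a; rewrite (G_lin a0 Hv Hc); have := x3 n a; have := y3 n a; nra.
  rewrite Rsum_lin x4 y4; ring.
- apply: compact_box.
    apply: (closed_ext (K' := fun la => (forall a, 0 <= la a) /\ Rsum la = 1 /\
        Rsum (fun a => la a * (exp (w a) - 1)) = 0 /\ forall n a, 0 <= Gw w n la a)).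
      move=> la; split.
        move=> [/Aff_char [h1 [h2 h3]] h4]; split; first by move=> a; left.
        split => //; split; last by move=> n a; left.
        rewrite (Rsum_ext (g := fun a => exp (w a) * la a - la a)); last by move=> a; ring.
        by rewrite Rsum_sub h2; ring.
      move=> [h1 [h2 [h3 h4]]].
      have Hpos := pos_lemma Hv Hc h4 (sum1_ne h2).
      split => //; apply/Aff_char; split; first exact: (Hpos 0%nat).
      split => //.
      have : Rsum (fun a => exp (w a) * la a) - Rsum la = 0.
        rewrite -Rsum_sub -h3; apply: Rsum_ext => a; ring.
      lra.
    apply: closed_and.
      apply: closed_all => a; apply: closed_ge; exact: cont_proj.
    apply: closed_and.
      apply: closed_eq; apply: (cont_sum (F := fun a mu => mu a)) => a; exact: cont_proj.
    apply: closed_and.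
      apply: closed_eq; exact: cont_lin.
    apply: closed_all => n; apply: closed_all => a; apply: closed_ge; exact: (cont_G a0 Hv Hc).
  move=> la [/Aff_char [h1 _] h2] a; split; first by left.
  have := Rsum_ge_term a (fun b => Rlt_le _ _ (h1 b)); rewrite h2 => h; lra.
Qed.

End Main.


Theorem mainTheorem5 (A : finType) (pi : comb_data A) (eps : nat -> bool)
  (w : A -> R) :
  valid_comb pi -> irreducible pi ->
  inf_complete pi eps ->
  (exists a : A, w a <> 0) ->
  ((exists lam, Aff pi eps w lam) <->
   (exists lam : A -> R, (forall a, 0 < lam a) /\
      Rsum (fun a => lam a * w a) = 0 /\
      rv_path_is (std_iem pi lam) eps))
  /\
  ((exists lam, Aff pi eps w lam) ->
     convex_set (Aff1 pi eps w) /\ compact_set (Aff1 pi eps w)).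
Proof.
move=> Hv _ Hc [a0 _]; split.
  exact: (main_iff a0 Hv Hc w).
move=> _; exact: (main_geom a0 Hv Hc w).
Qed.
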